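(* Let $\mathbf{H}$ be a fourth-order harmonic tensor on $\mathbb{R}^3$ (totally symmetric and traceless) which is cubic. Consider the linear equation \[ \operatorname{tr}(\mathbf{H}\times \mathbf{a}) = 0 \] in the unknown second-order symmetric tensor $\mathbf{a}$, where in any direct orthonormal basis \[ (\operatorname{tr}(\mathbf{H}\times\mathbf{a}))_{ijk} = \frac{1}{10}\left(\varepsilon_{ipq}H_{jkpr}+\varepsilon_{jpq}H_{ikpr}+\varepsilon_{kpq}H_{ijpr}\right)a_{qr}. \] Then the set of solutions $\mathbf{a}$ is a three-dimensional vector space. Moreover, the orthotropic tensors among these solutions form a dense open subset of this solution space, and for any orthotropic solution $\mathbf{a}$, every natural basis of $\mathbf{a}$ is a natural basis for $\mathbf{H}$.
   Context: $\mathrm{SO}(3)$ acts on tensors by $(g\star\mathbf{T})_{i_1\dots i_n}=g_{i_1j_1}\cdots g_{i_nj_n}T_{j_1\dots j_n}$. $\varepsilon_{ijk}$ is the Levi-Civita tensor, $\varepsilon_{ijk}=\det(\mathbf{e}_i,\mathbf{e}_j,\mathbf{e}_k)$ in a direct orthonormal basis. The symmetry group of a tensor is the subgroup of $\mathrm{SO}(3)$ fixing it. A fourth-order tensor $\mathbf{H}$ is called cubic if its symmetry group is conjugate in $\mathrm{SO}(3)$ to the octahedral group (the orientation-preserving symmetry group of the cube with vertices $(\pm1,\pm1,\pm1)$). A natural basis for a cubic $\mathbf{H}$ is a direct orthonormal basis $(\mathbf{u}_1,\mathbf{u}_2,\mathbf{u}_3)$ such that the symmetry group of $\mathbf{H}$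 is exactly the group of orientation-preserving symmetries of the cube with vertices $\pm\mathbf{u}_1\pm\mathbf{u}_2\pm\mathbf{u}_3$ (equivalently, the components of $\mathbf{H}$ in that basis are of cubic normal form, all components vanishing except those of type $H_{iiii}$, $H_{iijj}$, $H_{ijij}$, with $H_{1111}=H_{2222}=H_{3333}$ and $H_{1122}=H_{1133}=H_{2233}=H_{1212}=H_{1313}=H_{2323}$). A second-order symmetric tensor is orthotropic if it has three distinct eigenvalues; a natural basis for such a tensor is a direct orthonormal basis of its eigenvectors. *)

(* Defs.v *)
From HB Require Import structures.
From mathcomp Require Import all_boot all_order all_algebra all_fingroup.
From mathcomp Require Import reals.
Set Implicit Arguments. Unset Strict Implicit. Unset Printing Implicit Defensive.
Import Order.TTheory GRing.Theory Num.Theory.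
Local Open Scope ring_scope.

Section Defs.
Variable R : realType.

(* components of tensors in the standard (direct orthonormal) basis *)
Definition tensor4 := 'I_3 -> 'I_3 -> 'I_3 -> 'I_3 -> R.
Definition tensor3 := 'I_3 -> 'I_3 -> 'I_3 -> R.

Definition SO3 (g : 'M[R]_3) : Prop := g *m g^T = 1%:M /\ \det g = 1.

Definition act4 (g : 'M[R]_3) (H : tensor4) : tensor4 :=
  fun i1 i2 i3 i4 => \sum_(j1 < 3) \sum_(j2 < 3) \sum_(j3 < 3) \sum_(j4 < 3)
    g i1 j1 * g i2 j2 * g i3 j3 * g i4 j4 * H j1 j2 j3 j4.

Definition sym_group (H : tensor4) (g : 'M[R]_3) : Prop :=
  SO3 g /\ forall i j k l, act4 g H i j k l = H i j k l.

Definition tapp (H : tensor4) (x : 'I_4 -> 'I_3) : R :=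
  H (x (inord 0)) (x (inord 1)) (x (inord 2)) (x (inord 3)).
Definition totally_symmetric (H : tensor4) : Prop :=
  forall (s : 'S_4) (x : 'I_4 -> 'I_3), tapp H (x \o s) = tapp H x.
Definition traceless (H : tensor4) : Prop :=
  forall k l, \sum_(i < 3) H i i k l = 0.
Definition harmonic4 (H : tensor4) : Prop := totally_symmetric H /\ traceless H.

(* Levi-Civita: eps_ijk = det(e_i, e_j, e_k) *)
Definition levi (i j k : 'I_3) : R :=
  let f := fun c : 'I_3 => if val c == 0%N then i else if val c == 1%N then j else k in
  \det (\matrix_(r < 3, c < 3) ((r == f c)%:R : R)).

(* cube with vertices +-u1 +-u2 +-u3, u_i = columns of U *)
Definition sign_vec (s : 'cV[R]_3) : Prop := forall i, s i 0 = 1 \/ s i 0 = -1.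
Definition cube_vertex (U : 'M[R]_3) (v : 'cV[R]_3) : Prop :=
  exists s, sign_vec s /\ v = U *m s.
Definition cube_rot (U : 'M[R]_3) (g : 'M[R]_3) : Prop :=
  SO3 g /\ forall v, cube_vertex U v -> cube_vertex U (g *m v).
Definition octahedral (g : 'M[R]_3) : Prop := cube_rot 1%:M g.

Definition cubic (H : tensor4) : Prop :=
  exists P, SO3 P /\
    forall g, sym_group H g <-> exists o, octahedral o /\ g = P *m o *m P^T.

Definition natural_basis4 (H : tensor4) (U : 'M[R]_3) : Prop :=
  SO3 U /\ forall g, sym_group H g <-> cube_rot U g.

Definition trHx (H : tensor4) (a : 'M[R]_3) : tensor3 :=
  fun i j k => 10%:R^-1 * \sum_(p < 3) \sum_(q < 3) \sum_(r < 3)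
    (levi i p q * H j k p r + levi j p q * H i k p r + levi k p q * H i j p r) * a q r.

Definition symmetric2 (a : 'M[R]_3) : Prop := a^T = a.

Definition solution (H : tensor4) (a : 'M[R]_3) : Prop :=
  symmetric2 a /\ forall i j k, trHx H a i j k = 0.

Definition orthotropic (a : 'M[R]_3) : Prop :=
  symmetric2 a /\ exists l1 l2 l3 : R,
    [/\ l1 != l2, l1 != l3 & l2 != l3] /\
    [/\ eigenvalue a l1, eigenvalue a l2 & eigenvalue a l3].

Definition natural_basis2 (a U : 'M[R]_3) : Prop :=
  SO3 U /\ forall i : 'I_3, exists l : R, a *m col i U = l *: col i U.

Definition dim3_subspace (P : 'M[R]_3 -> Prop) : Prop :=
  exists a1 a2 a3, [/\ P a1, P a2, P a3,
    (forall c1 c2 c3 : R, c1 *: a1 + c2 *: a2 + c3 *: a3 = 0 ->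
       [/\ c1 = 0, c2 = 0 & c3 = 0]) &
    (forall a, P a <-> exists c1 c2 c3 : R, a = c1 *: a1 + c2 *: a2 + c3 *: a3)].

Definition mx_close (a b : 'M[R]_3) (e : R) : Prop :=
  forall i j, `|a i j - b i j| < e.

Definition open_in (P Q : 'M[R]_3 -> Prop) : Prop :=
  forall a, P a -> Q a -> exists2 e : R, 0 < e &
    forall b, P b -> mx_close a b e -> Q b.
Definition dense_in (P Q : 'M[R]_3 -> Prop) : Prop :=
  forall a, P a -> forall e : R, 0 < e -> exists b, [/\ P b, Q b & mx_close a b e].

End Defs.

(* Main.v *)
Require Import Defs.
From HB Require Import structures.
From mathcomp Require Import all_boot all_order all_algebra all_fingroup.
From mathcomp Require Import reals.
From mathcomp Require Import ring lra.
From Stdlib Require Import FunctionalExtensionality.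
Set Implicit Arguments. Unset Strict Implicit. Unset Printing Implicit Defensive.
Import Order.TTheory GRing.Theory Num.Theory.
Local Open Scope ring_scope.

Definition o0 : 'I_3 := @Ordinal 3 0 isT.
Definition o1 : 'I_3 := @Ordinal 3 1 isT.
Definition o2 : 'I_3 := @Ordinal 3 2 isT.

Lemma ord3P (i : 'I_3) : i = o0 \/ i = o1 \/ i = o2.
Proof.
case: i => [[|[|[|n]]] Hn]; [left|right;left|right;right|by []]; exact: val_inj.
Qed.

Lemma sum3 (V : nmodType) (F : 'I_3 -> V) : \sum_(i < 3) F i = F o0 + F o1 + F o2.
Proof.
rewrite !big_ord_recl big_ord0 addr0 addrA.
congr (F _ + F _ + F _); exact: val_inj.
Qed.

Section S.
Variable R : realType.

Definition Af (A : 'M[R]_3) (n m : nat) : R := A (inord n) (inord m).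
Lemma AfE (A : 'M[R]_3) x y : A x y = Af A x y.
Proof. by rewrite /Af !inord_val. Qed.

Lemma det3 (A : 'M[R]_3) : \det A =
  A o0 o0 * (A o1 o1 * A o2 o2 - A o1 o2 * A o2 o1)
  - A o0 o1 * (A o1 o0 * A o2 o2 - A o1 o2 * A o2 o0)
  + A o0 o2 * (A o1 o0 * A o2 o1 - A o1 o1 * A o2 o0).
Proof.
rewrite (expand_det_row _ ord0) !big_ord_recl big_ord0 /cofactor.
rewrite !(expand_det_row _ ord0) !big_ord_recl !big_ord0 /cofactor !det_mx11.
rewrite !mxE !AfE /=.
rewrite /bump /=. ring. Qed.

Lemma e01 : (o0 == o1) = false. Proof. by []. Qed.
Lemma e02 : (o0 == o2) = false. Proof. by []. Qed.
Lemma e10 : (o1 == o0) = false. Proof. by []. Qed.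
Lemma e12 : (o1 == o2) = false. Proof. by []. Qed.
Lemma e20 : (o2 == o0) = false. Proof. by []. Qed.
Lemma e21 : (o2 == o1) = false. Proof. by []. Qed.
Definition eqoE := (e01, e02, e10, e12, e20, e21).

Definition lv (i j k : nat) : R :=
  match i, j, k with
  | 0, 1, 2 | 1, 2, 0 | 2, 0, 1 => 1
  | 0, 2, 1 | 2, 1, 0 | 1, 0, 2 => -1
  | _, _, _ => 0 end.

Lemma levi_val i j k : levi R i j k = lv i j k.
Proof.
case: (ord3P i) => [->|[->|->]]; case: (ord3P j) => [->|[->|->]];
 case: (ord3P k) => [->|[->|->]];
 rewrite /levi det3 !mxE /= ?eqxx ?eqoE /=; ring.
Qed.

Definition S1 (g : 'M[R]_3) (T : tensor4 R) : tensor4 R :=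
  fun i j k l => \sum_(a < 3) g i a * T a j k l.
Definition S2 (g : 'M[R]_3) (T : tensor4 R) : tensor4 R :=
  fun i j k l => \sum_(a < 3) g j a * T i a k l.
Definition S3 (g : 'M[R]_3) (T : tensor4 R) : tensor4 R :=
  fun i j k l => \sum_(a < 3) g k a * T i j a l.
Definition S4 (g : 'M[R]_3) (T : tensor4 R) : tensor4 R :=
  fun i j k l => \sum_(a < 3) g l a * T i j k a.


Ltac fext := let i := fresh "i" in let j := fresh "j" in let k := fresh "k" in
  let l := fresh "l" in
  apply: functional_extensionality => i; apply: functional_extensionality => j;
  apply: functional_extensionality => k; apply: functional_extensionality => l.


Lemma act4_S g T : act4 g T = S1 g (S2 g (S3 g (S4 g T))).
Proof.
fext; rewrite /act4 /S1 /S2 /S3 /S4.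
apply: eq_bigr => a _; rewrite big_distrr /=; apply: eq_bigr => b _.
rewrite mulrA big_distrr /=; apply: eq_bigr => c _.
rewrite mulrA big_distrr /=; apply: eq_bigr => d _ /=; ring.
Qed.


Ltac comm_tac2 := fext; rewrite /S1 /S2 /S3 /S4 /=;
  under eq_bigr do rewrite big_distrr /=; rewrite exchange_big /=; apply: eq_bigr => a _;
  rewrite big_distrr /=; apply: eq_bigr => b _ /=; ring.

Lemma c21 g h T : S2 g (S1 h T) = S1 h (S2 g T). Proof. comm_tac2. Qed.

Lemma c31 g h T : S3 g (S1 h T) = S1 h (S3 g T). Proof. comm_tac2. Qed.

Lemma c41 g h T : S4 g (S1 h T) = S1 h (S4 g T). Proof. comm_tac2. Qed.

Lemma c32 g h T : S3 g (S2 h T) = S2 h (S3 g T). Proof. comm_tac2. Qed.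

Lemma c42 g h T : S4 g (S2 h T) = S2 h (S4 g T). Proof. comm_tac2. Qed.

Lemma c43 g h T : S4 g (S3 h T) = S3 h (S4 g T). Proof. comm_tac2. Qed.

Ltac comp_tac2 := fext; rewrite /S1 /S2 /S3 /S4 /=;
  under eq_bigr do rewrite big_distrr /=; rewrite exchange_big /=; apply: eq_bigr => b _;
  rewrite mxE big_distrl /=; apply: eq_bigr => a _; ring.

Lemma m1 g h T : S1 g (S1 h T) = S1 (g *m h) T. Proof. comp_tac2. Qed.

Lemma m2 g h T : S2 g (S2 h T) = S2 (g *m h) T. Proof. comp_tac2. Qed.

Lemma m3 g h T : S3 g (S3 h T) = S3 (g *m h) T. Proof. comp_tac2. Qed.

Lemma m4 g h T : S4 g (S4 h T) = S4 (g *m h) T. Proof. comp_tac2. Qed.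

Lemma act4_comp g h (T : tensor4 R) : act4 g (act4 h T) = act4 (g *m h) T.
Proof.
rewrite !act4_S c41 c42 c43 m4 c31 c32 m3 c21 m2 m1 //.
Qed.

Lemma dsum (F : 'I_3 -> R) i : \sum_(a < 3) (i == a)%:R * F a = F i.
Proof. case: (ord3P i) => [->|[->|->]]; rewrite sum3 !eqxx ?eqoE /=; ring. Qed.

Lemma dsum' (F : 'I_3 -> R) i : \sum_(a < 3) F a * (a == i)%:R = F i.
Proof. case: (ord3P i) => [->|[->|->]]; rewrite sum3 !eqxx ?eqoE /=; ring. Qed.

Lemma act4_1 (T : tensor4 R) : act4 1%:M T = T.
Proof.
rewrite act4_S; fext; rewrite /S1 /S2 /S3 /S4.
under eq_bigr do (rewrite mxE; under eq_bigr do (rewrite mxE; under eq_bigr do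
  (rewrite mxE; under eq_bigr do rewrite mxE))).
rewrite dsum dsum dsum dsum //.
Qed.


Lemma SO3_tr (g : 'M[R]_3) : SO3 g -> g^T *m g = 1%:M.
Proof. by case=> h _; apply: mulmx1C. Qed.

Definition p0 : 'I_2 := @Ordinal 2 0 isT.
Definition p1 : 'I_2 := @Ordinal 2 1 isT.
Definition Af2 (A : 'M[R]_2) (n m : nat) : R := A (inord n) (inord m).
Lemma Af2E (A : 'M[R]_2) x y : A x y = Af2 A x y.
Proof. by rewrite /Af2 !inord_val. Qed.

Lemma det2 (A : 'M[R]_2) : \det A = A p0 p0 * A p1 p1 - A p0 p1 * A p1 p0.
Proof.
rewrite (expand_det_row _ ord0) !big_ord_recl big_ord0 /cofactor !det_mx11 !mxE.
rewrite !Af2E /= /bump /=; ring.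
Qed.

Lemma mixed_gen (g : 'M[R]_3) i c d :
  \sum_(p < 3) \sum_(q < 3) levi R i p q * g p c * g q d =
  \sum_(a < 3) cofactor g i a * levi R a c d.
Proof.
rewrite !sum3 !levi_val /cofactor !det2 !mxE.
case: (ord3P i) => [->|[->|->]]; case: (ord3P c) => [->|[->|->]];
 case: (ord3P d) => [->|[->|->]]; rewrite !AfE /= /bump /=; ring.
Qed.

Lemma SO3_cof (g : 'M[R]_3) i a : SO3 g -> cofactor g i a = g i a.
Proof.
move=> Hg; have := SO3_tr Hg; case: Hg => h1 h2 h3.
have : \adj g = g^T.
  by rewrite -[\adj g]mul1mx -h3 -mulmxA mul_mx_adj h2 mulmx1.
by move/matrixP/(_ a i); rewrite !mxE.
Qed.

Lemma mixed (g : 'M[R]_3) i c d : SO3 g ->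
  \sum_(p < 3) \sum_(q < 3) levi R i p q * g p c * g q d =
  \sum_(a < 3) g i a * levi R a c d.
Proof. by move=> Hg; rewrite mixed_gen; apply: eq_bigr => a _; rewrite SO3_cof. Qed.


Definition Mt (K : tensor4 R) (a : 'M[R]_3) (i j k : 'I_3) : R :=
  \sum_(p < 3) \sum_(q < 3) \sum_(r < 3) levi R i p q * K j k p r * a q r.

Lemma trHx_M K a i j k :
  trHx K a i j k = 10%:R^-1 * (Mt K a i j k + Mt K a j i k + Mt K a k i j).
Proof. rewrite /trHx /Mt !sum3; ring. Qed.

Lemma M_S1 g X a i j k : Mt (S1 g X) a i j k = \sum_(c < 3) g j c * Mt X a i c k.
Proof. rewrite /Mt /S1 !sum3; ring. Qed.

Lemma M_S2 g X a i j k : Mt (S2 g X) a i j k = \sum_(c < 3) g k c * Mt X a i j c.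
Proof. rewrite /Mt /S2 !sum3; ring. Qed.

Lemma vec_lemma (g Z : 'M[R]_3) i : SO3 g ->
  \sum_(p < 3) \sum_(q < 3) levi R i p q * (g *m Z *m g^T) p q =
  \sum_(a < 3) g i a * (\sum_(c < 3) \sum_(d < 3) levi R a c d * Z c d).
Proof.
move=> Hg.
transitivity (\sum_(c < 3) \sum_(d < 3) Z c d *
   (\sum_(p < 3) \sum_(q < 3) levi R i p q * g p c * g q d)).
  by do 4 rewrite ?sum3 ?mxE; ring.
under eq_bigr do under eq_bigr do rewrite mixed //.
rewrite !sum3; ring.
Qed.


Lemma core (g : 'M[R]_3) X b i j k : SO3 g ->
  Mt (S3 g (S4 g X)) (g *m b *m g^T) i j k = \sum_(a < 3) g i a * Mt X b a j k.
Proof.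
move=> Hg; set N := \matrix_(c < 3, d < 3) X j k c d.
transitivity (\sum_(p < 3) \sum_(q < 3) levi R i p q *
   ((g *m N *m g^T) *m (g *m b *m g^T)^T) p q).
  rewrite /Mt /S3 /S4; apply: eq_bigr => p _; apply: eq_bigr => q _.
  rewrite mxE big_distrr /=; apply: eq_bigr => r _.
  by do 4 rewrite ?sum3 ?mxE; ring.
have -> : (g *m N *m g^T) *m (g *m b *m g^T)^T = g *m (N *m b^T) *m g^T.
  by rewrite !trmx_mul trmxK -!mulmxA (mulmxA g^T g) SO3_tr // mul1mx.
rewrite vec_lemma //; apply: eq_bigr => a _; congr (_ * _); rewrite /Mt.
by do 3 rewrite ?sum3 ?mxE; ring.
Qed.

Lemma M_act (g : 'M[R]_3) K b i j k : SO3 g ->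
  Mt (act4 g K) (g *m b *m g^T) i j k =
  \sum_(c < 3) g j c * \sum_(e < 3) g k e * \sum_(a < 3) g i a * Mt K b a c e.
Proof.
move=> Hg; rewrite act4_S M_S1; apply: eq_bigr => c _; congr (_ * _).
rewrite M_S2; apply: eq_bigr => e _; congr (_ * _); exact: core.
Qed.

Lemma trHx_transfer (g : 'M[R]_3) K b : SO3 g ->
  (forall i j k, trHx K b i j k = 0) ->
  forall i j k, trHx (act4 g K) (g *m b *m g^T) i j k = 0.
Proof.
move=> Hg HK i j k.
have H' : forall x y z, Mt K b x y z + Mt K b y x z + Mt K b z x y = 0.
  move=> x y z; have := HK x y z; rewrite trHx_M => /eqP.
  rewrite mulf_eq0 invr_eq0 pnatr_eq0 /= => /eqP //.
rewrite trHx_M !M_act //.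
transitivity (10%:R^-1 * \sum_(x < 3) \sum_(y < 3) \sum_(z < 3)
   g i x * g j y * g k z * (Mt K b x y z + Mt K b y x z + Mt K b z x y)).
  by rewrite !sum3; ring.
under eq_bigr do under eq_bigr do under eq_bigr do rewrite H'.
by rewrite !sum3; ring.
Qed.




Definition y4 (i j k l : 'I_3) (m : 'I_4) : 'I_3 :=
  match nat_of_ord m with 0 => i | 1 => j | 2 => k | _ => l end.

Lemma tapp_y4 (T : tensor4 R) i j k l : tapp T (y4 i j k l) = T i j k l.
Proof. by rewrite /tapp /y4 !inordK. Qed.


Lemma i4ne (a b : nat) : (a < 4)%N -> (b < 4)%N -> ((inord a : 'I_4) == inord b) = (a == b).
Proof. by move=> ha hb; apply/eqP/eqP => [/(congr1 (@nat_of_ord 4))|->//]; rewrite !inordK. Qed.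

Lemma tsym12 (T : tensor4 R) : totally_symmetric T -> forall i j k l, T i j k l = T j i k l.
Proof.
move=> hT i j k l; have := hT (tperm (inord 0) (inord 1)) (y4 i j k l).
rewrite tapp_y4 /tapp /= => <-.
rewrite !permE /= !i4ne //= /y4 !inordK //.
Qed.


Lemma tsym23 (T : tensor4 R) : totally_symmetric T -> forall i j k l, T i j k l = T i k j l.
Proof.
move=> hT i j k l; have := hT (tperm (inord 1) (inord 2)) (y4 i j k l).
rewrite tapp_y4 /tapp /= => <-.
rewrite !permE /= !i4ne //= /y4 !inordK //.
Qed.

Lemma tsym34 (T : tensor4 R) : totally_symmetric T -> forall i j k l, T i j k l = T i j l k.
Proof.
move=> hT i j k l; have := hT (tperm (inord 2) (inord 3)) (y4 i j k l).
rewrite tapp_y4 /tapp /= => <-.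
rewrite !permE /= !i4ne //= /y4 !inordK //.
Qed.

Lemma act_sym12 (g : 'M[R]_3) (T : tensor4 R) :
  (forall i j k l, T i j k l = T j i k l) ->
  forall i j k l, act4 g T i j k l = act4 g T j i k l.
Proof.
move=> hT i j k l; rewrite /act4 [RHS]exchange_big.
apply: eq_bigr => a _; apply: eq_bigr => b _; apply: eq_bigr => c _;
  apply: eq_bigr => d _; rewrite hT; ring.
Qed.

Lemma act_sym23 (g : 'M[R]_3) (T : tensor4 R) :
  (forall i j k l, T i j k l = T i k j l) ->
  forall i j k l, act4 g T i j k l = act4 g T i k j l.
Proof.
move=> hT i j k l; rewrite /act4; apply: eq_bigr => a _; rewrite [RHS]exchange_big.
apply: eq_bigr => b _; apply: eq_bigr => c _;
  apply: eq_bigr => d _; rewrite hT; ring.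
Qed.

Lemma act_sym34 (g : 'M[R]_3) (T : tensor4 R) :
  (forall i j k l, T i j k l = T i j l k) ->
  forall i j k l, act4 g T i j k l = act4 g T i j l k.
Proof.
move=> hT i j k l; rewrite /act4; apply: eq_bigr => a _; apply: eq_bigr => b _.
rewrite [RHS]exchange_big.
apply: eq_bigr => c _; apply: eq_bigr => d _; rewrite hT; ring.
Qed.

Lemma act_traceless (g : 'M[R]_3) (T : tensor4 R) : g^T *m g = 1%:M ->
  traceless T -> traceless (act4 g T).
Proof.
move=> hg hT k l; rewrite /act4.
transitivity (\sum_(a < 3) \sum_(b < 3) (\sum_(i < 3) g i a * g i b) *
  (\sum_(c < 3) \sum_(d < 3) g k c * g l d * T a b c d)).
  by rewrite !sum3; ring.
have E : forall a b, \sum_(i < 3) g i a * g i b = (a == b)%:R.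
  by move=> a b; move/matrixP/(_ a b): hg; rewrite !mxE => <-; apply: eq_bigr => i _; rewrite mxE.
under eq_bigr do under eq_bigr do rewrite E.
under eq_bigr do rewrite dsum.
transitivity (\sum_(c < 3) \sum_(d < 3) g k c * g l d * \sum_(a < 3) T a a c d).
  by rewrite !sum3; ring.
by rewrite big1 // => c _; rewrite big1 // => d _; rewrite hT mulr0.
Qed.


Definition sp (s : 'I_3 -> 'I_3) (e : 'I_3 -> R) : 'M[R]_3 :=
  \matrix_(i < 3, j < 3) (e i * (j == s i)%:R).

Lemma dsumc (c : R) (F : 'I_3 -> R) m : \sum_(a < 3) c * (a == m)%:R * F a = c * F m.
Proof. case: (ord3P m) => [->|[->|->]]; rewrite sum3 !eqxx ?eqoE /=; ring. Qed.

Lemma S1_sp s e X i j k l : S1 (sp s e) X i j k l = e i * X (s i) j k l.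
Proof. by rewrite /S1; under eq_bigr do rewrite mxE; rewrite dsumc. Qed.

Lemma S2_sp s e X i j k l : S2 (sp s e) X i j k l = e j * X i (s j) k l.
Proof. by rewrite /S2; under eq_bigr do rewrite mxE; rewrite dsumc. Qed.

Lemma S3_sp s e X i j k l : S3 (sp s e) X i j k l = e k * X i j (s k) l.
Proof. by rewrite /S3; under eq_bigr do rewrite mxE; rewrite dsumc. Qed.

Lemma S4_sp s e X i j k l : S4 (sp s e) X i j k l = e l * X i j k (s l).
Proof. by rewrite /S4; under eq_bigr do rewrite mxE; rewrite dsumc. Qed.

Lemma act4_sp s e T i j k l :
  act4 (sp s e) T i j k l = e i * e j * e k * e l * T (s i) (s j) (s k) (s l).
Proof. rewrite act4_S S1_sp S2_sp S3_sp S4_sp; ring. Qed.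

Lemma oct_sp s e : (forall i, e i = 1 \/ e i = -1) ->
  sp s e *m (sp s e)^T = 1%:M -> \det (sp s e) = 1 -> octahedral (sp s e).
Proof.
move=> he h1 h2; split; first by [].
move=> v [w [hw ->]]; exists (sp s e *m w); split; last by rewrite !mul1mx.
move=> i; rewrite mxE; under eq_bigr do rewrite mxE.
have -> : \sum_(a < 3) e i * (a == s i)%:R * w a 0 = e i * w (s i) 0 by rewrite dsumc.
by case: (he i) => ->; case: (hw (s i)) => ->; [left|right|right|left]; ring.
Qed.

Definition sc (i : 'I_3) : 'I_3 := match nat_of_ord i with 0 => o1 | 1 => o2 | _ => o0 end.
Definition e1 (i : 'I_3) : R := match nat_of_ord i with 0 => 1 | _ => -1 end.
Definition e2 (i : 'I_3) : R := match nat_of_ord i with 1 => 1 | _ => -1 end.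
Definition eone (i : 'I_3) : R := 1.

Ltac conc_oct := apply: oct_sp;
  [ let i := fresh "i" in move=> i; case: (ord3P i) => [->|[->|->]]; rewrite /=; by [left|right]
  | let i := fresh "i" in let j := fresh "j" in
    apply/matrixP => i j; rewrite !mxE sum3 !mxE;
    case: (ord3P i) => [->|[->|->]]; case: (ord3P j) => [->|[->|->]];
    rewrite /= ?eqxx ?eqoE /=; ring
  | rewrite det3 !mxE /= ?eqxx ?eqoE /=; ring ].

Definition ea (i : 'I_3) : R := if i == o0 then 1 else -1.
Definition eb (i : 'I_3) : R := if i == o1 then 1 else -1.
Definition cyc (i : 'I_3) : 'I_3 := if i == o0 then o1 else if i == o1 then o2 else o0.

Ltac evo := rewrite /ea /eb /cyc /eone; do 2 rewrite ?eqxx ?eqoE /=.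

Ltac conc_oct2 := apply: oct_sp;
  [ let i := fresh "i" in move=> i; case: (ord3P i) => [->|[->|->]]; evo; by [left|right]
  | let i := fresh "i" in let j := fresh "j" in
    apply/matrixP => i j; rewrite !mxE sum3 !mxE;
    case: (ord3P i) => [->|[->|->]]; case: (ord3P j) => [->|[->|->]];
    evo; ring
  | rewrite det3 !mxE; evo; ring ].

Lemma oct_D1 : octahedral (sp id ea). Proof. conc_oct2. Qed.

Lemma oct_D2 : octahedral (sp id eb). Proof. conc_oct2. Qed.

Lemma oct_C : octahedral (sp cyc eone). Proof. conc_oct2. Qed.


Definition Cf (i j k l : 'I_3) : R :=
  if (i == j) && (j == k) && (k == l) then 1
  else if ((i == j) && (k == l)) || ((i == k) && (j == l)) || ((i == l) && (j == k))
  then -(1/2) else 0.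

Lemma Kform (K : tensor4 R) :
 (forall a b c d, K a b c d = K b a c d) ->
 (forall a b c d, K a b c d = K a c b d) ->
 (forall a b c d, K a b c d = K a b d c) ->
 (forall c d, \sum_(a < 3) K a a c d = 0) ->
 (forall a b c d, K a b c d = ea a * ea b * ea c * ea d * K a b c d) ->
 (forall a b c d, K a b c d = eb a * eb b * eb c * eb d * K a b c d) ->
 (forall a b c d, K a b c d = K (cyc a) (cyc b) (cyc c) (cyc d)) ->
 forall a b c d, K a b c d = K o0 o0 o0 o0 * Cf a b c d.
Proof.
move=> h12 h23 h34 ht hA hB hC.
have r1 := h12 o1 o0; have r2 := h12 o2 o0; have r3 := h12 o2 o1.
have r4 := fun a => h23 a o1 o0; have r5 := fun a => h23 a o2 o0;
have r6 := fun a => h23 a o2 o1.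
have r7 := fun a b => h34 a b o1 o0; have r8 := fun a b => h34 a b o2 o0;
have r9 := fun a b => h34 a b o2 o1.
have f1 := hC o0 o0 o0 o0; have f2 := hC o1 o1 o1 o1; have f3 := hC o0 o0 o1 o1.
have f4 := hC o1 o1 o2 o2; have f5 := ht o0 o0.
move: f1 f2 f3 f4 f5; evo; rewrite sum3.
do 6 rewrite ?r1 ?r2 ?r3 ?r4 ?r5 ?r6 ?r7 ?r8 ?r9.
move=> f1 f2 f3 f4 f5 a b c d; move: (hA a b c d) (hB a b c d).
case: (ord3P a) => [->|[->|->]]; case: (ord3P b) => [->|[->|->]];
case: (ord3P c) => [->|[->|->]]; case: (ord3P d) => [->|[->|->]];
rewrite /Cf; evo; do 6 rewrite ?r1 ?r2 ?r3 ?r4 ?r5 ?r6 ?r7 ?r8 ?r9;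
move=> z1 z2; lra.
Qed.


Lemma trC_diag (l : R) (b : 'M[R]_3) : l != 0 -> b^T = b ->
  (forall i j k, trHx (fun a b' c d => l * Cf a b' c d) b i j k = 0) ->
  [/\ b o1 o0 = 0, b o2 o0 = 0 & b o2 o1 = 0].
Proof.
move=> hl hb H.
have s : forall i j, b j i = b i j by move=> i j; rewrite -{1}hb mxE.
have h1 := H o0 o0 o1; have h2 := H o0 o0 o2; have h3 := H o0 o1 o1.
move: h1 h2 h3; rewrite /trHx !sum3 !levi_val /Cf; evo.
rewrite (s o1 o0) (s o2 o0) (s o2 o1) => h1 h2 h3.
have k1 : l * b o2 o0 = 0 by nra.
have k2 : l * b o1 o0 = 0 by nra.
have k3 : l * b o2 o1 = 0 by nra.
by split; apply/eqP; [move/eqP: k2 | move/eqP: k1 | move/eqP: k3]; rewrite mulf_eq0 (negbTE hl).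
Qed.


Definition cv (c1 c2 c3 : R) (i : 'I_3) : R :=
  if i == o0 then c1 else if i == o1 then c2 else c3.
Definition dg (c1 c2 c3 : R) : 'M[R]_3 :=
  \matrix_(i < 3, j < 3) ((i == j)%:R * cv c1 c2 c3 i).

Lemma trC_dg l c1 c2 c3 i j k :
  trHx (fun a b c d => l * Cf a b c d) (dg c1 c2 c3) i j k = 0.
Proof.
case: (ord3P i) => [->|[->|->]]; case: (ord3P j) => [->|[->|->]];
case: (ord3P k) => [->|[->|->]];
rewrite /trHx !sum3 !levi_val /Cf !mxE /cv; evo; ring.
Qed.

Lemma dg_tr c1 c2 c3 : (dg c1 c2 c3)^T = dg c1 c2 c3.
Proof.
apply/matrixP => i j; rewrite !mxE.
case: (ord3P i) => [->|[->|->]]; case: (ord3P j) => [->|[->|->]]; rewrite /cv; evo; ring.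
Qed.

Definition r0f (i j : 'I_3) : R :=
  if i == o0 then (if j == o0 then 3/5 else if j == o1 then -(4/5) else 0)
  else if i == o1 then (if j == o0 then 4/5 else if j == o1 then 3/5 else 0)
  else (if j == o2 then 1 else 0).
Definition r0 : 'M[R]_3 := \matrix_(i < 3, j < 3) r0f i j.

Lemma r0_not_oct : ~ octahedral r0.
Proof.
case=> _ /(_ (1%:M *m const_mx 1)) [].
  by exists (const_mx 1); split => // i; left; rewrite mxE.
move=> s [hs]; rewrite !mul1mx => /matrixP/(_ o0 0).
rewrite !mxE sum3 !mxE /r0f; evo => e.
by case: (hs o0) => h; move: e; rewrite h => e; lra.
Qed.


Lemma r0_SO3 : SO3 r0.
Proof.
split.
  apply/matrixP => i j; rewrite !mxE sum3 !mxE.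
  by case: (ord3P i) => [->|[->|->]]; case: (ord3P j) => [->|[->|->]]; rewrite /r0f; evo; field.
by rewrite det3 !mxE /r0f; evo; field.
Qed.


Lemma SO3_T (g : 'M[R]_3) : SO3 g -> SO3 g^T.
Proof. by move=> hg; split; [rewrite trmxK; exact: SO3_tr | rewrite det_tr; case: hg]. Qed.

Lemma SO3_M (g h : 'M[R]_3) : SO3 g -> SO3 h -> SO3 (g *m h).
Proof.
move=> [g1 g2] [h1 h2]; split; last by rewrite det_mulmx g2 h2 mulr1.
by rewrite trmx_mul mulmxA -(mulmxA g) h1 mulmx1 g1.
Qed.

Lemma conjK (P X : 'M[R]_3) : SO3 P -> P^T *m (P *m X *m P^T) *m P = X.
Proof.
move=> hP; have h := SO3_tr hP.
by rewrite !mulmxA h mul1mx -mulmxA h mulmx1.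
Qed.

Lemma conjK' (P X : 'M[R]_3) : SO3 P -> P *m (P^T *m X *m P) *m P^T = X.
Proof.
move=> hP; case: (hP) => h _.
by rewrite !mulmxA h mul1mx -mulmxA h mulmx1.
Qed.

Lemma dg_mulr (x : 'M[R]_(1,3)) c1 c2 c3 j :
  (x *m dg c1 c2 c3) 0 j = x 0 j * cv c1 c2 c3 j.
Proof.
rewrite !mxE sum3 !mxE.
case: (ord3P j) => [->|[->|->]]; rewrite /cv; evo; ring.
Qed.

Lemma dg_mull (x : 'M[R]_(3,1)) c1 c2 c3 j :
  (dg c1 c2 c3 *m x) j 0 = cv c1 c2 c3 j * x j 0.
Proof.
rewrite !mxE sum3 !mxE.
case: (ord3P j) => [->|[->|->]]; rewrite /cv; evo; ring.
Qed.

Lemma rv_neq0 (w : 'M[R]_(1,3)) : w != 0 -> exists j, w 0 j != 0.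
Proof.
move=> hw; apply/existsP; apply: contraR hw => /existsPn h.
apply/eqP/matrixP => i j; rewrite (ord1 i) mxE; exact/eqP/negPn/h.
Qed.

Lemma eig_dg_rev (P : 'M[R]_3) c1 c2 c3 j : SO3 P ->
  eigenvalue (P *m dg c1 c2 c3 *m P^T) (cv c1 c2 c3 j).
Proof.
move=> hP; apply/eigenvalueP; exists (delta_mx 0 j *m P^T).
  have e : delta_mx 0 j *m dg c1 c2 c3 = cv c1 c2 c3 j *: delta_mx (0 : 'I_1) j.
    apply/matrixP => a b; rewrite (ord1 a) dg_mulr !mxE.
    case: (ord3P j) => [->|[->|->]]; case: (ord3P b) => [->|[->|->]]; rewrite /cv; evo; ring.
  by rewrite !mulmxA -(mulmxA _ P^T P) SO3_tr // mulmx1 e scalemxAl.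
apply: contraTneq isT => h.
have : delta_mx 0 j *m P^T *m P = delta_mx (0 : 'I_1) j.
  by rewrite -mulmxA SO3_tr // mulmx1.
rewrite h mul0mx => /matrixP/(_ 0 j); rewrite !mxE !eqxx /= => /eqP.
by rewrite eq_sym oner_eq0.
Qed.


Lemma eig_dg (P : 'M[R]_3) c1 c2 c3 x : SO3 P ->
  eigenvalue (P *m dg c1 c2 c3 *m P^T) x -> x = c1 \/ x = c2 \/ x = c3.
Proof.
move=> hP /eigenvalueP [v hv vnz].
set w := v *m P.
have hw : w *m dg c1 c2 c3 = x *: w.
  by rewrite /w scalemxAl -hv !mulmxA -(mulmxA _ P^T P) SO3_tr // mulmx1.
have wnz : w != 0.
  apply: contraNneq vnz => w0; have : w *m P^T = v.
    by rewrite /w -mulmxA; case: hP => -> _; rewrite mulmx1.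
  by rewrite w0 mul0mx => <-.
have [j hj] := rv_neq0 wnz.
move/matrixP/(_ 0 j): hw; rewrite dg_mulr [RHS]mxE => e.
have ej : cv c1 c2 c3 j = x.
  by apply: (mulfI hj); rewrite e mulrC.
move: ej; case: (ord3P j) => [->|[->|->]]; rewrite /cv; evo; move=> <-; tauto.
Qed.

Lemma orth_dg (P : 'M[R]_3) c1 c2 c3 : SO3 P ->
  (orthotropic (P *m dg c1 c2 c3 *m P^T) <-> [/\ c1 != c2, c1 != c3 & c2 != c3]).
Proof.
move=> hP; split.
  case=> _ [l1 [l2 [l3 [[n12 n13 n23] [e1 e2 e3]]]]].
  move: n12 n13 n23.
  case: (eig_dg hP e1) => [->|[->|->]]; case: (eig_dg hP e2) => [->|[->|->]];
  case: (eig_dg hP e3) => [->|[->|->]]; rewrite ?eqxx //= => n12 n13 n23;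
  by split => //; rewrite eq_sym.
case=> n12 n13 n23; split; first by rewrite /symmetric2 !trmx_mul trmxK dg_tr mulmxA.
exists c1, c2, c3; split; first by split.
by split; [move: (@eig_dg_rev P c1 c2 c3 o0 hP) | move: (@eig_dg_rev P c1 c2 c3 o1 hP)
  | move: (@eig_dg_rev P c1 c2 c3 o2 hP)]; rewrite /cv; evo.
Qed.

Lemma dg_of (b : 'M[R]_3) : b^T = b -> b o1 o0 = 0 -> b o2 o0 = 0 -> b o2 o1 = 0 ->
  b = dg (b o0 o0) (b o1 o1) (b o2 o2).
Proof.
move=> hb h1 h2 h3.
have s : forall i j, b j i = b i j by move=> i j; rewrite -{1}hb mxE.
apply/matrixP => i j; rewrite !mxE.
case: (ord3P i) => [->|[->|->]]; case: (ord3P j) => [->|[->|->]]; rewrite /cv; evo;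
 rewrite ?(s o1 o0) ?(s o2 o0) ?(s o2 o1) ?h1 ?h2 ?h3; ring.
Qed.


Lemma sol_char (H : tensor4 R) (P : 'M[R]_3) (l : R) : SO3 P -> l != 0 ->
  H = act4 P (fun a b c d => l * Cf a b c d) ->
  forall a, solution H a <-> exists c1 c2 c3, a = P *m dg c1 c2 c3 *m P^T.
Proof.
move=> hP hl eH a; split.
  case=> ha hsol; set b := P^T *m a *m P.
  have eK : act4 P^T H = (fun a b c d => l * Cf a b c d).
    by rewrite eH act4_comp SO3_tr // act4_1.
  have hb : forall i j k, trHx (fun a b c d => l * Cf a b c d) b i j k = 0.
    by move=> i j k; rewrite -eK /b; have := trHx_transfer (SO3_T hP) hsol i j k; rewrite trmxK.
  have bT : b^T = b by rewrite /b !trmx_mul trmxK ha mulmxA.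
  have [h1 h2 h3] := trC_diag hl bT hb.
  exists (b o0 o0), (b o1 o1), (b o2 o2); rewrite -dg_of // /b conjK' //.
case=> c1 [c2 [c3 ->]]; split.
  by rewrite /symmetric2 !trmx_mul trmxK dg_tr mulmxA.
by rewrite eH; apply: trHx_transfer => // i j k; apply: trC_dg.
Qed.


Lemma structure (H : tensor4 R) (P : 'M[R]_3) : harmonic4 H -> SO3 P ->
  (forall g, sym_group H g <-> exists o, octahedral o /\ g = P *m o *m P^T) ->
  exists2 lam, lam != 0 & H = act4 P (fun a b c d => lam * Cf a b c d).
Proof.
move=> [hS hT] hP hcub.
set K := act4 P^T H.
have eH : H = act4 P K by rewrite /K act4_comp; case: (hP) => -> _; rewrite act4_1.
have Kinv : forall o, octahedral o -> act4 o K = K.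
  move=> o ho; have [_ hinv] : sym_group H (P *m o *m P^T) by apply/hcub; exists o.
  have eG : act4 (P *m o *m P^T) H = H by fext; exact: hinv.
  rewrite /K act4_comp -{2}eG act4_comp; congr act4.
  by rewrite !mulmxA SO3_tr // mul1mx.
have hA : forall a b c d, K a b c d = ea a * ea b * ea c * ea d * K a b c d.
  by move=> a b c d; rewrite -{1}(Kinv _ oct_D1) act4_sp.
have hB : forall a b c d, K a b c d = eb a * eb b * eb c * eb d * K a b c d.
  by move=> a b c d; rewrite -{1}(Kinv _ oct_D2) act4_sp.
have hC : forall a b c d, K a b c d = K (cyc a) (cyc b) (cyc c) (cyc d).
  by move=> a b c d; rewrite -{1}(Kinv _ oct_C) act4_sp /eone !mul1r.
have hTK : traceless K.
  by apply: act_traceless => //; rewrite trmxK; case: hP.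
have Kf := Kform (act_sym12 _ (tsym12 hS)) (act_sym23 _ (tsym23 hS))
  (act_sym34 _ (tsym34 hS)) hTK hA hB hC.
set lam := K o0 o0 o0 o0 in Kf.
have eK : K = fun a b c d => lam * Cf a b c d by fext; exact: Kf.
exists lam; last by rewrite eH eK.
apply/eqP => l0.
have H0 : H = fun _ _ _ _ => 0.
  by rewrite eH eK l0; fext; rewrite /act4 !sum3 /=; ring.
have : sym_group H (P *m r0 *m P^T).
  split; first by apply: SO3_M; [apply: SO3_M | apply: SO3_T] => //; exact: r0_SO3.
  by move=> i j k m; rewrite H0 /act4 !sum3; ring.
move/hcub => [o [ho e]].
have eo : o = r0 by rewrite -(conjK r0 hP) e conjK.
by apply: r0_not_oct; rewrite -eo.
Qed.


Lemma SO3_bound (P : 'M[R]_3) i j : SO3 P -> `|P i j| <= 1.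
Proof.
move=> hP; have := SO3_tr hP => /matrixP/(_ j j); rewrite !mxE sum3 !mxE eqxx /= => e.
have s0 := sqr_ge0 (P o0 j); have s1 := sqr_ge0 (P o1 j); have s2 := sqr_ge0 (P o2 j).
rewrite ler_norml; case: (ord3P i) => [->|[->|->]]; apply/andP; split; nra.
Qed.

Lemma prod_bound (a b c : R) : `|a| <= 1 -> `|c| <= 1 -> `|a * b * c| <= `|b|.
Proof.
move=> ha hc; rewrite !normrM.
have h0 := normr_ge0 a; have h1 := normr_ge0 b; have h2 := normr_ge0 c.
have k1 : `|b| * `|c| <= `|b| by apply: ler_piMr.
have k2 : `|a| * (`|b| * `|c|) <= `|b| * `|c| by apply: ler_piMl => //; exact: mulr_ge0.
rewrite -mulrA; exact: le_trans k2 k1.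
Qed.

Lemma conj_bound (P X : 'M[R]_3) e k : SO3 P -> (forall q r, `|X q r| < e) ->
  `|(P^T *m X *m P) k k| < 9%:R * e.
Proof.
move=> hP hX.
have hb q r : - e < P q k * X q r * P r k < e.
  rewrite -ltr_norml; apply: le_lt_trans (hX q r); apply: prod_bound; exact: SO3_bound.
have [a1 a2] := andP (hb o0 o0); have [a3 a4] := andP (hb o0 o1);
have [a5 a6] := andP (hb o0 o2); have [a7 a8] := andP (hb o1 o0);
have [b1 b2] := andP (hb o1 o1); have [b3 b4] := andP (hb o1 o2);
have [b5 b6] := andP (hb o2 o0); have [b7 b8] := andP (hb o2 o1);
have [c1 c2] := andP (hb o2 o2).
rewrite ltr_norml; do 3 rewrite ?mxE ?sum3; apply/andP; split; lra.
Qed.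


Lemma open_part (H : tensor4 R) (P : 'M[R]_3) lam : SO3 P -> lam != 0 ->
  H = act4 P (fun a b c d => lam * Cf a b c d) ->
  open_in (solution H) (fun a => solution H a /\ orthotropic a).
Proof.
move=> hP hl eH a _ [ha hor].
have [c1 [c2 [c3 ea]]] := (sol_char hP hl eH a).1 ha.
subst a; move: hor => /(@orth_dg P c1 c2 c3 hP) [n12 n13 n23].
set d := Num.min `|c1 - c2| (Num.min `|c1 - c3| `|c2 - c3|).
have dpos : 0 < d by rewrite /d !lt_min !normr_gt0 !subr_eq0 n12 n13 n23.
have d12 : d <= `|c1 - c2| by rewrite /d !ge_min lexx ?orbT.
have d13 : d <= `|c1 - c3| by rewrite /d !ge_min lexx ?orbT.
have d23 : d <= `|c2 - c3| by rewrite /d !ge_min lexx ?orbT.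
exists (d / 20%:R); first by rewrite divr_gt0 // ltr0n.
move=> b hb hcl.
have [c1' [c2' [c3' eb]]] := (sol_char hP hl eH b).1 hb.
split => //; rewrite eb; apply/(@orth_dg P c1' c2' c3' hP).
have key : forall k, `|cv c1' c2' c3' k - cv c1 c2 c3 k| < 9%:R * (d / 20%:R).
  move=> k; have e1 : P^T *m (b - P *m dg c1 c2 c3 *m P^T) *m P = dg c1' c2' c3' - dg c1 c2 c3.
    by rewrite mulmxBr mulmxBl eb !conjK.
  have hX : forall q r, `|(b - P *m dg c1 c2 c3 *m P^T) q r| < d / 20%:R.
    move=> q r; have -> : (b - P *m dg c1 c2 c3 *m P^T) q r =
      b q r - (P *m dg c1 c2 c3 *m P^T) q r by rewrite !mxE.
    rewrite distrC; exact: hcl.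
  have := @conj_bound P (b - P *m dg c1 c2 c3 *m P^T) (d / 20%:R) k hP hX.
  by rewrite e1 !mxE !eqxx /= !mul1r.
move: (key o0) (key o1) (key o2); rewrite /cv; evo; rewrite !ltr_norml.
move=> /andP [k1 k2] /andP [k3 k4] /andP [k5 k6]; clear eH hcl eb key hb hl.
by split; apply/negP => /eqP E; [move: d12 | move: d13 | move: d23];
  rewrite ler_normr => /orP [] h; lra.
Qed.


Lemma nb3 (t f1 f2 f3 : R) : ~~ [&& t != f1, t != f2 & t != f3] ->
  t = f1 \/ t = f2 \/ t = f3.
Proof.
case: (eqVneq t f1) => [->|n1]; first by left.
case: (eqVneq t f2) => [->|n2]; first by right; left.
case: (eqVneq t f3) => [->|n3]; first by right; right.
by [].
Qed.

Lemma pick_t (f1 f2 f3 e : R) : 0 < e ->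
  exists t, [/\ 0 < t, 4%:R * t <= e, t != f1, t != f2 & t != f3].
Proof.
move=> he.
case: (boolP [&& e / 4%:R != f1, e / 4%:R != f2 & e / 4%:R != f3]) => [/and3P [a b c]|g1].
  by exists (e / 4%:R); split => //; lra.
case: (boolP [&& e / 8%:R != f1, e / 8%:R != f2 & e / 8%:R != f3]) => [/and3P [a b c]|g2].
  by exists (e / 8%:R); split => //; lra.
case: (boolP [&& e / 16%:R != f1, e / 16%:R != f2 & e / 16%:R != f3]) => [/and3P [a b c]|g3].
  by exists (e / 16%:R); split => //; lra.
case: (boolP [&& e / 32%:R != f1, e / 32%:R != f2 & e / 32%:R != f3]) => [/and3P [a b c]|g4].
  by exists (e / 32%:R); split => //; lra.
exfalso.
case: (nb3 g1) => [x1|[x1|x1]]; case: (nb3 g2) => [x2|[x2|x2]];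
case: (nb3 g3) => [x3|[x3|x3]]; case: (nb3 g4) => [x4|[x4|x4]]; lra.
Qed.


Lemma dense_part (H : tensor4 R) (P : 'M[R]_3) lam : SO3 P -> lam != 0 ->
  H = act4 P (fun a b c d => lam * Cf a b c d) ->
  dense_in (solution H) (fun a => solution H a /\ orthotropic a).
Proof.
move=> hP hl eH a ha e he.
have [c1 [c2 [c3 ->]]] := (sol_char hP hl eH a).1 ha.
have [t [t0 t4 n1 n2 n3]] := pick_t (c1 - c2) ((c1 - c3) / 2%:R) (c2 - c3) he.
have hs : solution H (P *m dg c1 (c2 + t) (c3 + 2%:R * t) *m P^T).
  by apply/(sol_char hP hl eH); exists c1, (c2 + t), (c3 + 2%:R * t).
exists (P *m dg c1 (c2 + t) (c3 + 2%:R * t) *m P^T); split => //.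
  split => //; apply/(@orth_dg P c1 (c2 + t) (c3 + 2%:R * t) hP); clear eH ha hs.
  split; apply/negP => /eqP E; [move/eqP: n1 | move/eqP: n2 | move/eqP: n3]; apply; lra.
move=> i j; clear eH ha hs.
have E : (P *m dg c1 c2 c3 *m P^T) i j - (P *m dg c1 (c2 + t) (c3 + 2%:R * t) *m P^T) i j
   = - (t * (P i o1 * P j o1) + 2%:R * t * (P i o2 * P j o2)).
  by do 4 rewrite ?mxE ?sum3; rewrite /cv; evo; ring.
rewrite E normrN.
have u1 : `|P i o1 * P j o1| <= 1.
  rewrite normrM; apply: mulr_ile1 => //; exact: SO3_bound.
have u2 : `|P i o2 * P j o2| <= 1.
  rewrite normrM; apply: mulr_ile1 => //; exact: SO3_bound.
move: u1 u2; rewrite !ler_norml => /andP [u1 u1'] /andP [u2 u2'].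
rewrite ltr_norml; apply/andP; split; nra.
Qed.


Lemma sq1 (x : R) : x * x = 1 -> x = 1 \/ x = -1.
Proof.
move=> h; have : (x - 1) * (x + 1) = 0 by rewrite mulrDr !mulrBl h; ring.
move/eqP; rewrite mulf_eq0 subr_eq0 addr_eq0 => /orP [/eqP ->|/eqP ->]; tauto.
Qed.

Lemma zl (c l x : R) : c * x = l * x -> x = 0 \/ c = l.
Proof.
move=> h; have : (c - l) * x = 0 by rewrite mulrBl h subrr.
move/eqP; rewrite mulf_eq0 subr_eq0 => /orP [/eqP ->|/eqP ->]; tauto.
Qed.

Lemma unit_col (c1 c2 c3 l x y z : R) : c1 != c2 -> c1 != c3 -> c2 != c3 ->
  c1 * x = l * x -> c2 * y = l * y -> c3 * z = l * z -> x * x + y * y + z * z = 1 ->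
  [/\ x = 0 \/ x = 1 \/ x = -1, y = 0 \/ y = 1 \/ y = -1 & z = 0 \/ z = 1 \/ z = -1].
Proof.
move=> n12 n13 n23 hx hy hz hn.
case: (zl hx) => [x0|lx]; case: (zl hy) => [y0|ly]; case: (zl hz) => [z0|lz].
- by exfalso; move: hn; rewrite x0 y0 z0; lra.
- by move: hn; rewrite x0 y0 !mul0r !add0r => /sq1 h; split; tauto.
- by move: hn; rewrite x0 z0 !mul0r addr0 add0r => /sq1 h; split; tauto.
- by move: n23; rewrite ly lz eqxx.
- by move: hn; rewrite y0 z0 !mul0r !addr0 => /sq1 h; split; tauto.
- by move: n13; rewrite lx lz eqxx.
- by move: n12; rewrite lx ly eqxx.
- by move: n12; rewrite lx ly eqxx.
Qed.

Lemma sgn_row (x y z s1 s2 s3 : R) :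
  x = 0 \/ x = 1 \/ x = -1 -> y = 0 \/ y = 1 \/ y = -1 -> z = 0 \/ z = 1 \/ z = -1 ->
  x * x + y * y + z * z = 1 ->
  s1 = 1 \/ s1 = -1 -> s2 = 1 \/ s2 = -1 -> s3 = 1 \/ s3 = -1 ->
  x * s1 + y * s2 + z * s3 = 1 \/ x * s1 + y * s2 + z * s3 = -1.
Proof.
move=> hx hy hz hn h1 h2 h3; move: hn.
case: hx => [->|[->|->]]; case: hy => [->|[->|->]]; case: hz => [->|[->|->]];
case: h1 => ->; case: h2 => ->; case: h3 => ->; move=> hn;
first [ by left; lra | by right; lra | by exfalso; lra ].
Qed.

Lemma sign_mul (M : 'M[R]_3) (s : 'cV[R]_3) :
  (forall i j, M i j = 0 \/ M i j = 1 \/ M i j = -1) -> M *m M^T = 1%:M ->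
  sign_vec s -> sign_vec (M *m s).
Proof.
move=> hM hMM hs i; rewrite mxE sum3.
have hn : M i o0 * M i o0 + M i o1 * M i o1 + M i o2 * M i o2 = 1.
  by move/matrixP/(_ i i): hMM; rewrite !mxE sum3 !mxE eqxx.
by apply: sgn_row.
Qed.


Lemma vert_equiv (U P : 'M[R]_3) : SO3 P -> SO3 U ->
  (forall i j, (P^T *m U) i j = 0 \/ (P^T *m U) i j = 1 \/ (P^T *m U) i j = -1) ->
  forall v, cube_vertex U v <-> cube_vertex P v.
Proof.
move=> hP hU hS v.
have [P1 _] := hP; have [U1 _] := hU.
have SS : (P^T *m U) *m (P^T *m U)^T = 1%:M.
  by rewrite trmx_mul trmxK mulmxA -(mulmxA _ U) U1 mulmx1 SO3_tr.
have StSt : (P^T *m U)^T *m (P^T *m U)^T^T = 1%:M.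
  by rewrite trmxK trmx_mul trmxK mulmxA -(mulmxA _ P) P1 mulmx1 SO3_tr.
split.
  case=> s [hs ->]; exists ((P^T *m U) *m s); split; first exact: sign_mul.
  by rewrite !mulmxA P1 mul1mx.
case=> s [hs ->]; exists ((P^T *m U)^T *m s); split.
  by apply: sign_mul => // i j; rewrite mxE; exact: hS.
by rewrite trmx_mul trmxK !mulmxA U1 mul1mx.
Qed.

Lemma rot_equiv (U P g : 'M[R]_3) : (forall v, cube_vertex U v <-> cube_vertex P v) ->
  cube_rot U g <-> cube_rot P g.
Proof.
move=> hv; split; case=> hg hr; split => // v.
  by move/hv => h; apply/hv; exact: hr.
by move/hv => h; apply/hv; exact: hr.
Qed.

Lemma cube_conj (P g : 'M[R]_3) : SO3 P ->
  ((exists o, octahedral o /\ g = P *m o *m P^T) <-> cube_rot P g).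
Proof.
move=> hP; split.
  case=> o [[ho1 ho2] ->]; split.
    by apply: SO3_M; [apply: SO3_M | apply: SO3_T].
  move=> v [s [hs ->]].
  have [s' [hs' e]] := ho2 (1%:M *m s) (ex_intro _ s (conj hs erefl)).
  exists s'; split => //; move: e; rewrite !mul1mx => e.
  by rewrite -!mulmxA (mulmxA P^T) SO3_tr // mul1mx e.
case=> hg hv; exists (P^T *m g *m P); split; last by rewrite conjK'.
split; first by apply: SO3_M; [apply: SO3_M; [apply: SO3_T|] |].
move=> v [s [hs ->]].
have [s' [hs' e]] := hv (P *m s) (ex_intro _ s (conj hs erefl)).
exists s'; split => //.
by rewrite !mul1mx -!mulmxA e mulmxA SO3_tr // mul1mx.
Qed.


Lemma S_entries (P U : 'M[R]_3) c1 c2 c3 : SO3 P -> SO3 U ->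
  c1 != c2 -> c1 != c3 -> c2 != c3 ->
  (forall i : 'I_3, exists l : R,
     (P *m dg c1 c2 c3 *m P^T) *m col i U = l *: col i U) ->
  forall k j, (P^T *m U) k j = 0 \/ (P^T *m U) k j = 1 \/ (P^T *m U) k j = -1.
Proof.
move=> hP hU n12 n13 n23 hcol k j.
have [l hl] := hcol j.
have ecol : col j (P^T *m U) = P^T *m col j U by rewrite !colE mulmxA.
have e : dg c1 c2 c3 *m col j (P^T *m U) = l *: col j (P^T *m U).
  by rewrite ecol scalemxAr -hl !mulmxA SO3_tr // mul1mx.
have ek : forall m, cv c1 c2 c3 m * (P^T *m U) m j = l * (P^T *m U) m j.
  move=> m; move/matrixP/(_ m 0): e; rewrite dg_mull !mxE.
  by [].
have hn : (P^T *m U) o0 j * (P^T *m U) o0 j + (P^T *m U) o1 j * (P^T *m U) o1 j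
   + (P^T *m U) o2 j * (P^T *m U) o2 j = 1.
  have : (P^T *m U)^T *m (P^T *m U) = 1%:M.
    by rewrite trmx_mul trmxK mulmxA -(mulmxA _ P) (proj1 hP) mulmx1 SO3_tr.
  by move/matrixP/(_ j j); rewrite !mxE sum3 !mxE eqxx.
have := ek o0; have := ek o1; have := ek o2; rewrite /cv; evo => h2 h1 h0.
have [r0' r1' r2'] := unit_col n12 n13 n23 h0 h1 h2 hn.
by case: (ord3P k) => [->|[->|->]].
Qed.


Lemma nat_part (H : tensor4 R) (P : 'M[R]_3) lam : SO3 P -> lam != 0 ->
  H = act4 P (fun a b c d => lam * Cf a b c d) ->
  (forall g, sym_group H g <-> exists o, octahedral o /\ g = P *m o *m P^T) ->
  forall a U : 'M[R]_3, solution H a -> orthotropic a ->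
    natural_basis2 a U -> natural_basis4 H U.
Proof.
move=> hP hl eH hcub a U ha hor [hU hcol].
have [c1 [c2 [c3 ea]]] := (sol_char hP hl eH a).1 ha; subst a.
have [n12 n13 n23] := (@orth_dg P c1 c2 c3 hP).1 hor.
have hS := S_entries hP hU n12 n13 n23 hcol.
split => // g.
have e1 : sym_group H g <-> cube_rot P g := iff_trans (hcub g) (cube_conj g hP).
have e2 : cube_rot U g <-> cube_rot P g := rot_equiv g (vert_equiv hP hU hS).
by split => h; [apply: e2.2; apply: e1.1 | apply: e1.2; apply: e2.1].
Qed.

Lemma dg_inj (P : 'M[R]_3) c1 c2 c3 : SO3 P -> P *m dg c1 c2 c3 *m P^T = 0 ->
  [/\ c1 = 0, c2 = 0 & c3 = 0].
Proof.
move=> hP h; have : dg c1 c2 c3 = 0 by rewrite -(conjK (dg c1 c2 c3) hP) h mulmx0 mul0mx.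
move/matrixP => e; split; [move: (e o0 o0) | move: (e o1 o1) | move: (e o2 o2)];
  rewrite !mxE /cv; evo; move=> <-; ring.
Qed.


Lemma dg_lin (P : 'M[R]_3) c1 c2 c3 :
  c1 *: (P *m dg 1 0 0 *m P^T) + c2 *: (P *m dg 0 1 0 *m P^T) + c3 *: (P *m dg 0 0 1 *m P^T)
  = P *m dg c1 c2 c3 *m P^T.
Proof.
apply/matrixP => i j; do 5 rewrite ?mxE ?sum3; rewrite /cv; evo; ring.
Qed.


End S.

Theorem mainTheorem1 (R : realType) (H : tensor4 R) :
  harmonic4 H -> cubic H ->
  [/\ dim3_subspace (solution H),
      open_in (solution H) (fun a => solution H a /\ orthotropic a),
      dense_in (solution H) (fun a => solution H a /\ orthotropic a) &
      forall a U : 'M[R]_3, solution H a -> orthotropic a ->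
        natural_basis2 a U -> natural_basis4 H U].
Proof.
move=> hH [P [hP hcub]].
have [lam hl eH] := structure hH hP hcub.
split.
- exists (P *m dg 1 0 0 *m P^T), (P *m dg 0 1 0 *m P^T), (P *m dg 0 0 1 *m P^T); split.
  + by apply/(sol_char hP hl eH); exists 1, 0, 0.
  + by apply/(sol_char hP hl eH); exists 0, 1, 0.
  + by apply/(sol_char hP hl eH); exists 0, 0, 1.
  + by move=> c1 c2 c3; rewrite dg_lin; exact: dg_inj.
  + move=> a; split.
      by move/(sol_char hP hl eH) => [c1 [c2 [c3 ->]]]; exists c1, c2, c3; rewrite dg_lin.
    by move=> [c1 [c2 [c3 ->]]]; apply/(sol_char hP hl eH); exists c1, c2, c3; rewrite dg_lin.
- exact: open_part hP hl eH.
- exact: dense_part hP hl eH.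
- exact: nat_part hP hl eH hcub.
Qed.
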